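(* Let $N=[n]$, let $v:2^N\to\mathbb{R}_+$ be a monotone submodular valuation with $v(\emptyset)=0$, and let $X$ be a decision map for $v$. Let $p=(p_1,\dots,p_n)$ be a mixed Nash equilibrium of the pricing game defined by $v$ and $X$. Then for every $i$, $p_i\ge v(\{i\}\mid N\setminus\{i\})$ with probability $1$. Moreover, if $\mathbb{E}[u_i(p)]=0$, then $\Pr[v(\{i\}\mid X(p))>0]=0$.
   Context: Pricing game: $N=[n]$ services, service $i$ controlled by seller $i$. Buyer valuation $v:2^N\to\mathbb{R}_+$, monotone, $v(\emptyset)=0$; submodular means $v(S\cup T)+v(S\cap T)\le v(S)+v(T)$. Marginal value $v(T\mid S)=v(S\cup T)-v(S)$. For $p\in\mathbb{R}^n_+$, $p(S)=\sum_{j\in S}p_j$, $D(v;p)=\arg\max_{S\subseteq N}(v(S)-p(S))$. A decision map is $X:\mathbb{R}^n_+\to2^N$ with $X(p)\in D(v;p)$ for all $p$. Seller $i$'s utility is $u_i(p)=p_i\mathbf{1}\{i\in X(p)\}$. A mixed Nash equilibrium is a vector $p=(p_1,\dots,p_n)$ of independent random variables with values in $\mathbb{R}_+$ such that $\mathbb{E}[u_i(p_i,p_{-i})]\ge\mathbb{E}[u_i(p_i',p_{-i})]$ for every $i$ and every $p_i'\in\mathbb{R}_+$. *)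

(* Defs.v *)
From HB Require Import structures.
From mathcomp Require Import all_boot all_order all_algebra.
From mathcomp Require Import all_classical all_reals all_analysis.
Set Implicit Arguments. Unset Strict Implicit. Unset Printing Implicit Defensive.
Import Order.TTheory GRing.Theory Num.Theory.
Local Open Scope ring_scope.
Local Open Scope classical_set_scope.

Section Pricing.
Variables (R : realType) (n : nat).

Definition valuation := {set 'I_n} -> R.
Definition prices := 'I_n -> R.

Definition monotone_val (v : valuation) :=
  forall S T : {set 'I_n}, S \subset T -> v S <= v T.
Definition nonneg_val (v : valuation) := forall S, 0 <= v S.
Definition submodular (v : valuation) :=
  forall S T : {set 'I_n}, v (S :|: T) + v (S :&: T) <= v S + v T.

Definition marginal (v : valuation) (T S : {set 'I_n}) : R := v (S :|: T) - v S.

Definition pcost (p : prices) (S : {set 'I_n}) : R := \sum_(j in S) p j.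

Definition nonneg_prices (p : prices) := forall j, 0 <= p j.

Definition in_demand (v : valuation) (p : prices) (S : {set 'I_n}) :=
  forall T : {set 'I_n}, v T - pcost p T <= v S - pcost p S.

Definition decision_map (v : valuation) (X : prices -> {set 'I_n}) :=
  forall p, nonneg_prices p -> in_demand v p (X p).

Definition util (X : prices -> {set 'I_n}) (i : 'I_n) (p : prices) : R :=
  if i \in X p then p i else 0.

Definition deviate (p : prices) (i : 'I_n) (q : R) : prices :=
  fun j => if j == i then q else p j.

End Pricing.

(* Mutual independence of the random variables p_1, ..., p_n (product rule
   for every family of Borel sets; taking B j = setT recovers subfamilies). *)
Definition independent_rvs {d} {T : measurableType d} {R : realType} {n : nat}
  (P : probability T R) (p : 'I_n -> T -> R) :=
  forall B : 'I_n -> set R, (forall j, measurable (B j)) ->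
    P (\bigcap_(j in [set: 'I_n]) (p j @^-1` B j)) =
    (\prod_(j < n) P (p j @^-1` B j))%E.

(* Mixed Nash equilibrium of the pricing game (v, X): p is a vector of
   independent nonnegative random variables on a probability space, such that
   all utilities involved are measurable (so the expectations are defined) and
   no unilateral deviation to a deterministic price q >= 0 increases the
   expected utility. *)
Definition mixed_NE {d} {T : measurableType d} {R : realType} {n : nat}
  (P : probability T R) (X : prices R n -> {set 'I_n}) (p : 'I_n -> T -> R) :=
  (forall j, measurable_fun setT (p j)) /\
  (forall j t, 0 <= p j t) /\
  independent_rvs P p /\
  (forall i, measurable_fun setT (fun t => util X i (fun j => p j t))) /\
  (forall i q, 0 <= q ->
      measurable_fun setT (fun t => util X i (deviate (fun j => p j t) i q))) /\
  (forall i q, 0 <= q ->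
          (\int[P]_t (util X i (deviate (fun j => p j t) i q))%:E
           <= \int[P]_t (util X i (fun j => p j t))%:E)%E).

(* Main.v *)
Require Import Defs.
From HB Require Import structures.
From mathcomp Require Import all_boot all_order all_algebra.
From mathcomp Require Import all_classical all_reals all_analysis.
From mathcomp Require Import ring lra.
Set Implicit Arguments. Unset Strict Implicit.
Import Order.TTheory GRing.Theory Num.Theory.
Local Open Scope ring_scope.
Local Open Scope classical_set_scope.



Definition Qp (R : realType) (n : nat) (v : valuation R n) (i : 'I_n)
  (x : prices R n) (a : R) : Prop :=
  exists S : {set 'I_n}, i \in S /\ forall S' : {set 'I_n}, i \notin S' ->
     a < v S - pcost x (S :\ i) - (v S' - pcost x S').

Lemma pcostD1 (R : realType) (n : nat) (x : prices R n) (i : 'I_n) (S : {set 'I_n}) :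
  i \in S -> pcost x S = x i + pcost x (S :\ i).
Proof. by move=> iS; rewrite /pcost (big_setD1 i iS). Qed.

Lemma pcost_dev (R : realType) (n : nat) (x : prices R n) (i : 'I_n) q (S : {set 'I_n}) :
  i \notin S -> pcost (deviate x i q) S = pcost x S.
Proof.
move=> iS; apply: eq_bigr => j jS; rewrite /deviate; case: eqP => // ji.
by move: iS; rewrite -ji jS.
Qed.

Lemma Qp_dev (R : realType) (n : nat) (v : valuation R n) i x q a :
  Qp v i (deviate x i q) a <-> Qp v i x a.
Proof.
split=> -[S [iS H]]; exists S; split=> // S' iS'; have := H S' iS';
  rewrite !pcost_dev // ?setD11 //.
Qed.

Lemma F1 (R : realType) (n : nat) (v : valuation R n) X i x a :
  decision_map v X -> nonneg_prices x -> x i < a -> Qp v i x a -> i \in X x.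
Proof.
move=> dm x0 xa [S [iS H]]; apply/negPn/negP => iY.
have := H _ iY; have := dm x x0 S; rewrite (pcostD1 x iS); lra.
Qed.

Lemma F2 (R : realType) (n : nat) (v : valuation R n) X i x a :
  decision_map v X -> nonneg_prices x -> i \in X x -> a < x i -> Qp v i x a.
Proof.
move=> dm x0 iY ax; exists (X x); split=> // S' iS'.
have := dm x x0 S'; rewrite (pcostD1 x iY); lra.
Qed.

Lemma F4 (R : realType) (n : nat) (v : valuation R n) X i x :
  decision_map v X -> nonneg_val v -> monotone_val v -> nonneg_prices x ->
  i \in X x -> x i <= v finset.setT.
Proof.
move=> dm v0 mv x0 iY.
have := dm x x0 (X x :\ i); rewrite (pcostD1 x iY).
have := mv (X x) finset.setT (finset.subsetT _); have := v0 (X x :\ i); lra.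
Qed.

Lemma F_low (R : realType) (n : nat) (v : valuation R n) X i x :
  decision_map v X -> submodular v -> nonneg_prices x ->
  x i < marginal v [set i] (~: [set i]) -> i \in X x.
Proof.
move=> dm sv x0; rewrite /marginal finset.setUC finset.setUCr => xm.
apply/negPn/negP => iY.
have e1 : (X x :|: [set i]) :\ i = X x.
  by apply/setP => j; rewrite !inE; case: (eqVneq j i) => [->|_]; rewrite ?(negbTE iY) /= ?orbT ?orbF ?andbT ?andbF.
have e2 : (X x :|: [set i]) :|: ~: [set i] = finset.setT.
  by apply/setP => j; rewrite !inE; case: (eqVneq j i) => [->|_]; rewrite ?(negbTE iY) /= ?orbT ?orbF ?andbT ?andbF.
have e3 : (X x :|: [set i]) :&: ~: [set i] = X x.
  by apply/setP => j; rewrite !inE; case: (eqVneq j i) => [->|_]; rewrite ?(negbTE iY) /= ?orbT ?orbF ?andbT ?andbF.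
have := sv (X x :|: [set i]) (~: [set i]); rewrite e2 e3.
have := dm x x0 (X x :|: [set i]).
have iS : i \in X x :|: [set i] by rewrite !inE eqxx orbT.
rewrite (pcostD1 x iS) e1.
lra.
Qed.

Lemma F5 (R : realType) (n : nat) (v : valuation R n) X i x a :
  decision_map v X -> nonneg_prices x -> 0 <= a ->
  a < marginal v [set i] (X x) -> Qp v i x a.
Proof.
move=> dm x0 a0; rewrite /marginal => am.
have iY : i \notin X x.
  apply/negP => iY; move: am; rewrite (_ : X x :|: [set i] = X x); first lra.
  by apply/setP => j; rewrite !inE; case: (eqVneq j i) => [->|_]; rewrite ?(negbTE iY) /= ?orbT ?orbF ?andbT ?andbF.
have e1 : (X x :|: [set i]) :\ i = X x.
  by apply/setP => j; rewrite !inE; case: (eqVneq j i) => [->|_]; rewrite ?(negbTE iY) /= ?orbT ?orbF ?andbT ?andbF.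
exists (X x :|: [set i]); split; first by rewrite !inE eqxx orbT.
move=> S' iS'; rewrite e1; have := dm x x0 S'; lra.
Qed.



Definition rectG d (T : measurableType d) (R : realType) n (p : 'I_n -> T -> R)
  (i : 'I_n) : set (set T) :=
  [set E | exists B : 'I_n -> set R, (forall j, measurable (B j)) /\ B i = setT /\
      E = \bigcap_(j in [set: 'I_n]) (p j @^-1` B j)].

Lemma rect_measurable d (T : measurableType d) (R : realType) n (p : 'I_n -> T -> R)
  (B : 'I_n -> set R) : (forall j, measurable_fun setT (p j)) ->
  (forall j, measurable (B j)) ->
  measurable (\bigcap_(j in [set: 'I_n]) (p j @^-1` B j)).
Proof.
move=> mp mB; apply: fin_bigcap_measurable; first exact: finite_finset.
move=> j _; rewrite -[X in measurable X]setTI; exact: mp.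
Qed.

Lemma probE d (T : measurableType d) (R : realType) (P : probability T R) (A : set T) :
  measurable A -> (P A)%E = (fine (P A))%:E.
Proof.
move=> mA; rewrite fineK // ge0_fin_numE ?measure_ge0 //.
by rewrite (le_lt_trans (probability_le1 P mA)) // ltry.
Qed.

Lemma indep_sigma d (T : measurableType d) (R : realType) n (P : probability T R)
  (p : 'I_n -> T -> R) (i : 'I_n) (J : set R) :
  measurable J -> (forall j, measurable_fun setT (p j)) -> independent_rvs P p ->
  forall S, <<s rectG p i >> S ->
    measurable S /\ P (p i @^-1` J `&` S) = (P (p i @^-1` J) * P S)%E.
Proof.
move=> mJ mp ind.
have mA : measurable (p i @^-1` J) by rewrite -[X in measurable X]setTI; exact: mp.
apply: (@dynkin_induction _ (g_sigma_algebraType (rectG p i)) (rectG p i)) => //.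
-
  move=> E F [B [mB [Bi ->]]] [C [mC [Ci ->]]].
  exists (fun j => B j `&` C j); split; first by move=> j; exact: measurableI.
  split; first by rewrite Bi Ci setTI.
  apply/seteqP; split => t /=.
    by move=> [H1 H2] j _; split; [exact: H1|exact: H2].
  by move=> H; split => j jT; have [] := H j jT.
- split; first exact: measurableT.
  by rewrite setIT probability_setT mule1.
- move=> E [B [mB [Bi ->]]]; split; first exact: rect_measurable.
  pose B' := fun j => if j == i then J else B j.
  have mB' : forall j, measurable (B' j) by move=> j; rewrite /B'; case: eqP.
  have -> : p i @^-1` J `&` \bigcap_(j in [set: 'I_n]) (p j @^-1` B j) =
      \bigcap_(j in [set: 'I_n]) (p j @^-1` B' j).
    apply/seteqP; split => t /=.
      move=> [Jt H] j _; rewrite /B'; case: eqP => [->//|_]; exact: H.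
    move=> H; split; first by have := H i I; rewrite /B' eqxx.
    move=> j _; have := H j I; rewrite /B'; case: eqP => [->|//].
    by rewrite Bi.
  rewrite !ind //.
  rewrite (bigD1 i) //= [in RHS](bigD1 i) //= Bi preimage_setT probability_setT mul1e.
  rewrite /B' eqxx; congr (_ * _)%E; apply: eq_bigr => j /negPf ->//.
- move=> S _ [mS HS]; split; first exact: measurableC.
  rewrite probability_setC // -setDE measureD //; last first.
    by rewrite (le_lt_trans (probability_le1 P mA)) // ltry.
  transitivity (P (p i @^-1` J) - P (p i @^-1` J) * P S)%E.
    by congr (_ - _)%E; exact: HS.
  rewrite (probE P mA) (probE P mS) -EFinM -EFinB.
  rewrite -EFinB -EFinM; congr (_%:E); ring.
- move=> F _ tF HF.
  have mF k : d.-measurable (F k : set T) by case: (HF k).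
  split; first exact: bigcupT_measurable.
  rewrite setI_bigcupr measure_bigcup; last 2 first.
    - by move=> k _; exact: measurableI.
    - by move=> k l _ _ [t [[_ Fk] [_ Fl]]]; apply: tF => //; exists t.
  rewrite measure_bigcup //=.
  rewrite (probE P mA).
  rewrite -nneseriesZl; last by move=> k _; exact: measure_ge0.
  apply: eq_eseriesr => k _; have [_ ->] := HF k; by rewrite -(probE P mA).
Qed.



Lemma mp_sigma d (T : measurableType d) (R : realType) n (p : 'I_n -> T -> R)
  (i j : 'I_n) : j != i ->
  measurable_fun (setT : set (g_sigma_algebraType (rectG p i))) (p j).
Proof.
move=> ji _ Y mY; rewrite setTI; apply: sub_sigma_algebra.
exists (fun k => if k == j then Y else setT); split.
  by move=> k; case: eqP.
split; first by rewrite eq_sym (negbTE ji).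
apply/seteqP; split => t /=.
  by move=> Yt k _; case: eqP => [->//|].
by move=> H; have := H j I; rewrite eqxx.
Qed.

Lemma pcost_sigma d (T : measurableType d) (R : realType) n (p : 'I_n -> T -> R)
  (i : 'I_n) (S : {set 'I_n}) : i \notin S ->
  measurable_fun (setT : set (g_sigma_algebraType (rectG p i)))
    (fun t => pcost (fun j => p j t) S).
Proof.
move=> iS; rewrite /pcost.
under eq_fun do rewrite big_mkcond /=.
apply: measurable_sum => j.
case: (boolP (j \in S)) => jS.
  apply: mp_sigma; apply/eqP => ji; move: iS; by rewrite -ji jS.
exact: measurable_cst.
Qed.

Lemma Qset_sigma d (T : measurableType d) (R : realType) n (p : 'I_n -> T -> R)
  (v : valuation R n) (i : 'I_n) (a : R) :
  <<s rectG p i >> [set t | Qp v i (fun j => p j t) a].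
Proof.
pose T' := g_sigma_algebraType (rectG p i).
have -> : [set t | Qp v i (fun j => p j t) a] =
  \bigcup_(S in [set S : {set 'I_n} | i \in S])
    \bigcap_(S' in [set S' : {set 'I_n} | i \notin S'])
      [set t | a < v S - pcost (fun j => p j t) (S :\ i) -
                   (v S' - pcost (fun j => p j t) S')].
  apply/seteqP; split => t /=.
    by move=> [S [iS H]]; exists S => // S' iS'; exact: H.
  by move=> [S iS H]; exists S; split => // S' iS'; exact: H.
apply: (@fin_bigcup_measurable _ T'); first exact: finite_finset.
move=> S iS; apply: (@fin_bigcap_measurable _ T'); first exact: finite_finset.
move=> S' iS'.
have mh : measurable_fun (setT : set T') (fun t => v S - pcost (fun j => p j t) (S :\ i) -
                   (v S' - pcost (fun j => p j t) S')).
  apply: measurable_realfun.measurable_funB; apply: measurable_realfun.measurable_funB; try exact: measurable_cst.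
    by apply: pcost_sigma; rewrite !inE eqxx.
  exact: pcost_sigma.
have mI : measurable (`]a, +oo[ : set R) by exact: measurable_itv.
have := mh measurableT _ mI; rewrite setTI.
congr (_ _); apply/seteqP; split => t /=; by rewrite in_itv /= andbT.
Qed.



Lemma int_indicZ d (T : measurableType d) (R : realType) (P : probability T R)
  (E : set T) (k : R) : measurable E -> 0 <= k ->
  (\int[P]_t (k * \1_E t)%:E = k%:E * P E)%E.
Proof.
move=> mE k0; under eq_integral do rewrite EFinM.
rewrite ge0_integralZl_EFin //.
- by rewrite integral_indic // setIT.
- by apply/measurable_realfun.measurable_EFinP; exact: measurable_realfun.measurable_indic.
Qed.

Lemma util_ge0 (R : realType) n (X : prices R n -> {set 'I_n}) i x :
  nonneg_prices x -> 0 <= util X i x.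
Proof. by move=> x0; rewrite /util; case: ifP. Qed.

Lemma dev_nonneg (R : realType) n (x : prices R n) i q :
  nonneg_prices x -> 0 <= q -> nonneg_prices (deviate x i q).
Proof. by move=> x0 q0 j; rewrite /deviate; case: eqP. Qed.

Lemma dev_lower d (T : measurableType d) (R : realType) n (P : probability T R)
  (v : valuation R n) (X : prices R n -> {set 'I_n}) (p : 'I_n -> T -> R) i q a :
  decision_map v X -> (forall j t, 0 <= p j t) ->
  measurable_fun setT (fun t => util X i (deviate (fun j => p j t) i q)) ->
  d.-measurable [set t | Qp v i (fun j => p j t) a] ->
  0 <= q -> q < a ->
  (q%:E * P [set t | Qp v i (fun j => p j t) a] <=
     \int[P]_t (util X i (deviate (fun j => p j t) i q))%:E)%E.
Proof.
move=> dm p0 mu mE q0 qa; rewrite -int_indicZ //.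
apply: ge0_le_integral => //.
- by move=> t _; rewrite lee_fin indicE mulr_ge0.
- apply/measurable_realfun.measurable_EFinP; apply: measurable_realfun.measurable_funM.
    exact: measurable_cst.
  exact: measurable_realfun.measurable_indic.
- exact/measurable_realfun.measurable_EFinP.
move=> t _; rewrite lee_fin indicE.
have x0 : nonneg_prices (fun j => p j t) by move=> j; exact: p0.
case: (boolP (t \in _)) => tE; last by rewrite mulr0; apply: util_ge0; exact: dev_nonneg.
rewrite mulr1 /util; have Q : Qp v i (deviate (fun j => p j t) i q) a.
  by apply/Qp_dev; move: tE; rewrite inE.
rewrite (F1 dm (dev_nonneg i x0 q0) _ Q); last by rewrite /deviate eqxx.
by rewrite /deviate eqxx.
Qed.

Lemma part2 d (T : measurableType d) (R : realType) n (P : probability T R)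
  (v : valuation R n) (X : prices R n -> {set 'I_n}) (p : 'I_n -> T -> R) i :
  decision_map v X -> mixed_NE P X p ->
  (\int[P]_t (util X i (fun j => p j t))%:E = 0)%E ->
  P.-negligible [set t | 0 < marginal v [set i] (X (fun j => p j t))].
Proof.
move=> dm [mp [p0 [ind [mu [mud NE]]]]] U0.
have mE a : d.-measurable [set t | Qp v i (fun j => p j t) a].
  by have [] := indep_sigma (P:=P) (i:=i) (@measurableT _ R) mp ind (@Qset_sigma _ _ _ _ p v i a).
apply: (negligibleS _ (negligible_bigcup
   (F := fun k => [set t | Qp v i (fun j => p j t) k.+1%:R^-1]) _)).
  move=> t /= mg; have [k] := ltr_add_invr mg; rewrite add0r => km.
  exists k => //=; apply: (F5 dm _ _ km); last by rewrite invr_ge0.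
  by move=> j; exact: p0.
move=> k; apply/negligibleP; first exact: mE.
set a : R := k.+1%:R^-1.
have a0 : 0 < a by rewrite invr_gt0.
have h2 : 0 <= a / 2 by lra.
have h3 : a / 2 < a by lra.
have H := dev_lower P dm p0 (mud i (a / 2) h2) (mE a) h2 h3.
have := le_trans H (NE i _ h2); rewrite U0 pmule_rle0 ?lte_fin; last lra.
by move=> H0; apply/eqP; rewrite eq_le H0 measure_ge0.
Qed.



Lemma bucket (R : realType) (c dl x : R) (K : nat) : 0 < dl -> c < x ->
  x <= c + K%:R * dl ->
  exists2 r : nat, (r < K)%N & c + r%:R * dl < x <= c + r.+1%:R * dl.
Proof.
move=> d0 cx; elim: K => [|K IH] xK.
  by move: xK; rewrite mul0r addr0 => xc; lra.
case: (lerP x (c + K%:R * dl)) => xK'.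
  by have [r rK H] := IH xK'; exists r => //; exact: ltnW.
by exists K => //; rewrite xK' xK.
Qed.

Lemma int_lin d (T : measurableType d) (R : realType) (P : probability T R)
  (C : set T) (K : nat) (F : nat -> set T) (c : R) (w : nat -> R) :
  measurable C -> (forall r, measurable (F r)) -> 0 <= c -> (forall r, 0 <= w r) ->
  (\int[P]_t (c * \1_C t + \sum_(r < K) w r * \1_(F r) t)%:E =
     c%:E * P C + \sum_(r < K) (w r)%:E * P (F r))%E.
Proof.
move=> mC mF c0 w0.
under eq_integral do rewrite EFinD -sumEFin.
rewrite ge0_integralD //.
- rewrite int_indicZ //; congr (_ + _)%E.
  rewrite ge0_integral_sum //.
  - by apply: eq_bigr => r _; rewrite int_indicZ.
  - move=> r; apply/measurable_realfun.measurable_EFinP; apply: measurable_realfun.measurable_funM.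
      exact: measurable_cst.
    exact: measurable_realfun.measurable_indic.
  - by move=> r t _; rewrite lee_fin indicE mulr_ge0.
- by move=> t _; rewrite lee_fin indicE mulr_ge0.
- apply/measurable_realfun.measurable_EFinP; apply: measurable_realfun.measurable_funM.
    exact: measurable_cst.
  exact: measurable_realfun.measurable_indic.
- by move=> t _; apply: sume_ge0 => r _; rewrite lee_fin indicE mulr_ge0.
- apply: emeasurable_sum => r.
  apply/measurable_realfun.measurable_EFinP; apply: measurable_realfun.measurable_funM.
    exact: measurable_cst.
  exact: measurable_realfun.measurable_indic.
Qed.



Lemma part1 d (T : measurableType d) (R : realType) n (P : probability T R)
  (v : valuation R n) (X : prices R n -> {set 'I_n}) (p : 'I_n -> T -> R) i :
  nonneg_val v -> monotone_val v -> submodular v ->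
  decision_map v X -> mixed_NE P X p ->
  P [set t | p i t < marginal v [set i] (~: [set i])] = 0%E.
Proof.
move=> v0 mv sv dm [mp [p0 [ind [mu [mud NE]]]]].
set m := marginal v [set i] (~: [set i]).
set W := v finset.setT.
have W0 : 0 <= W by exact: v0.
have x0 t : nonneg_prices (fun j => p j t) by move=> j; exact: p0.
set U := (\int[P]_t (util X i (fun j => p j t))%:E)%E.
have mE a : d.-measurable [set t | Qp v i (fun j => p j t) a].
  by have [] := indep_sigma (P:=P) (i:=i) (@measurableT _ R) mp ind (@Qset_sigma _ _ _ _ p v i a).
have U0 : (0 <= U)%E.
  by apply: integral_ge0 => t _; rewrite lee_fin util_ge0.
have UW : (U <= W%:E)%E.
  rewrite -[X in (_ <= X)%E]mule1 -(probability_setT P) -integral_cst //.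
  apply: ge0_le_integral => //.
  - by move=> t _; rewrite lee_fin util_ge0.
  - exact/measurable_realfun.measurable_EFinP.
  - by move=> t _; rewrite lee_fin /util; case: ifP => // iX; exact: (F4 dm v0 mv (x0 t) iX).
set u := fine U.
have Uu : U = u%:E.
  by rewrite fineK // ge0_fin_numE // (le_lt_trans UW) // ltry.
have lowU q : 0 <= q -> q < m -> q <= u.
  move=> q0 qm; rewrite -lee_fin -Uu; apply: le_trans (NE i q q0).
  rewrite -[X in (X <= _)%E]mule1 -(probability_setT P) -integral_cst //.
  apply: ge0_le_integral => //.
    by apply/measurable_realfun.measurable_EFinP; exact: mud.
  move=> t _; rewrite lee_fin /util (F_low dm sv (dev_nonneg i (x0 t) q0)).
    by rewrite /deviate eqxx.
  by rewrite /deviate eqxx.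
have mpi := mp i.
have mpre (I0 : interval R) : d.-measurable [set t | p i t \in I0].
  have mI : measurable [set` I0] by exact: measurable_itv.
  by have := mpi measurableT _ mI; rewrite setTI.
have mA : d.-measurable [set t | p i t < m].
  have := mpre (`]-oo, m[)%R; congr (_ _); apply/seteqP; split => t /=; by rewrite in_itv.
have mCk k : d.-measurable [set t | p i t <= m - k.+1%:R^-1].
  have := mpre (`]-oo, m - k.+1%:R^-1])%R; congr (_ _); apply/seteqP; split => t /=; by rewrite in_itv.
apply/eqP; rewrite eq_le measure_ge0 andbT leNgt; apply/negP => Apos.
have [k Ck] : exists k, P [set t | p i t <= m - k.+1%:R^-1] != 0%E.
  apply: contrapT => nex.
  have H k : P [set t | p i t <= m - k.+1%:R^-1] = 0%E.
    by apply/eqP; apply: contrapT => nz; apply: nex; exists k; apply/negP.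
  have : P.-negligible [set t | p i t < m].
    apply: (negligibleS _ (negligible_bigcup
      (F := fun k => [set t | p i t <= m - k.+1%:R^-1]) _)).
      move=> t /= ptm; have [k0 km] := ltr_add_invr ptm; exists k0 => //=; rewrite lerBrDr; exact: ltW.
    by move=> k; apply/negligibleP; [exact: mCk | exact: H].
  by move/(negligibleP _ mA) => A0; move: Apos; rewrite A0 ltxx.
set c := m - k.+1%:R^-1.
set C := [set t | p i t <= c].
have mC : d.-measurable C by exact: mCk.
have {}Ck : P C != 0%E := Ck.
have cm : c < m.
  have h : 0 < k.+1%:R^-1 :> R by rewrite invr_gt0.
  by rewrite /c ltrBlDr ltrDl.
set al := fine (P C).
have PC : P C = al%:E by rewrite /al -probE.
have al0 : 0 < al by rewrite -lte_fin -PC lt0e Ck measure_ge0.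
have c0 : 0 <= c.
  rewrite leNgt; apply/negP => c0; move: Ck; rewrite (_ : C = set0) ?measure0 ?eqxx //.
  apply/seteqP; split => t //= ptc; move: ptc; rewrite /C /= => ptc; have := p0 i t; lra.
set dl := al * (m - c) / 8.
have dl0 : 0 < dl by rewrite /dl; apply: divr_gt0 => //; apply: mulr_gt0 => //; lra.
set K := Num.bound `|(W - c) / dl|.
have HK : W <= c + K%:R * dl.
  have h := archi_boundP (normr_ge0 ((W - c) / dl)).
  have : (W - c) / dl <= K%:R by rewrite (le_trans (ler_norm _)) // ltW.
  by rewrite ler_pdivrMr // => h2; lra.
set a := fun r : nat => c + r%:R * dl.
have a_ge0 r : 0 <= a r by rewrite /a; apply: addr_ge0 => //; apply: mulr_ge0 => //; exact: ltW.
have aS r : a r.+1 = a r + dl by rewrite /a -natr1 mulrDl mul1r addrA.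
set Ar := fun r : nat => p i @^-1` `]a r, a r.+1].
set Er := fun r : nat => [set t | Qp v i (fun j => p j t) (a r)].
have mJ r : measurable (`]a r, a r.+1] : set R) by exact: measurable_itv.
have mAr r : d.-measurable (Ar r).
  by have := mpi measurableT _ (mJ r); rewrite setTI.
have indep r : P (Ar r `&` Er r) = (P (Ar r) * P (Er r))%E.
  by have [] := indep_sigma (P:=P) (i:=i) (mJ r) mp ind (@Qset_sigma _ _ _ _ p v i (a r)).
have ind0 t : 0 <= \1_(Ar 0%N) t :> R by rewrite indicE.
have pw t : util X i (fun j => p j t) <=
    c * \1_C t + \sum_(r < K) a r.+1 * \1_(Ar r `&` Er r) t.
  have s0 : 0 <= \sum_(r < K) a r.+1 * \1_(Ar r `&` Er r) t.
    by apply: sumr_ge0 => r _; apply: mulr_ge0 => //; rewrite indicE.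
  have s1 : 0 <= c * \1_C t by apply: mulr_ge0 => //; rewrite indicE.
  rewrite /util; case: ifP => iX; last by apply: addr_ge0.
  case: (lerP (p i t) c) => pc.
    by rewrite indicE (mem_set (pc : C t)) mulr1; lra.
  have pW := F4 dm v0 mv (x0 t) iX.
  have [r rK /andP[h1 h2]] := bucket dl0 pc (le_trans pW HK).
  have tF : t \in Ar r `&` Er r.
    apply/mem_set; split; first by rewrite /Ar /= in_itv /= h1 h2.
    exact: (F2 dm (x0 t) iX h1).
  rewrite (bigD1 (Ordinal rK)) //= [\1_(Ar r `&` Er r) t]indicE tF mulr1.
  have : 0 <= \sum_(j < K | j != Ordinal rK) a j.+1 * \1_(Ar j `&` Er j) t.
    by apply: sumr_ge0 => j _; apply: mulr_ge0 => //; rewrite indicE.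
  have : a r.+1 = c + r.+1%:R * dl by []. lra.
have mArE r : d.-measurable (Ar r `&` Er r) by apply: measurableI; [exact: mAr|exact: mE].
have Ub : (U <= c%:E * P C + \sum_(r < K) (a r.+1)%:E * P (Ar r `&` Er r))%E.
  rewrite -(@int_lin _ _ _ P C K (fun r => Ar r `&` Er r) c (fun r => a r.+1)) //; apply: ge0_le_integral => //.
  - by move=> t _; rewrite lee_fin util_ge0.
  - exact/measurable_realfun.measurable_EFinP.
  - apply/measurable_realfun.measurable_EFinP.
    apply: measurable_realfun.measurable_funD.
      apply: measurable_realfun.measurable_funM; first exact: measurable_cst.
      exact: measurable_realfun.measurable_indic.
    apply: measurable_sum => r.
    apply: measurable_realfun.measurable_funM; first exact: measurable_cst.
    exact: measurable_realfun.measurable_indic.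
  - by move=> t _; rewrite lee_fin pw.
set pA := fun r => fine (P (Ar r)).
set pE := fun r => fine (P (Er r)).
have PA r : P (Ar r) = (pA r)%:E by rewrite /pA; apply: probE; exact: mAr.
have PE r : P (Er r) = (pE r)%:E by rewrite /pE; apply: probE; exact: mE.
have pA0 r : 0 <= pA r by rewrite -lee_fin -PA measure_ge0.
have pE0 r : 0 <= pE r by rewrite -lee_fin -PE measure_ge0.
have pE1 r : pE r <= 1 by rewrite -lee_fin -PE; apply: probability_le1; exact: mE.
have Ubr : u <= c * al + \sum_(r < K) a r.+1 * (pA r * pE r).
  move: Ub; rewrite Uu PC.
  under eq_bigr => r _ do rewrite indep PA PE.
  move=> h; rewrite -lee_fin (le_trans h) //.
  rewrite -[X in (_ <= X)%E]/((c * al)%:E + (\sum_(r < K) a r.+1 * (pA r * pE r))%:E)%E.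
  rewrite -sumEFin le_eqVlt; apply/orP; left; apply/eqP; congr (_ + _)%E.
have u0 : 0 <= u by rewrite -lee_fin -Uu.
have hE r : a r.+1 * pE r <= u + 2 * dl.
  rewrite aS; case: (lerP dl (a r)) => ha.
    have q0 : 0 <= a r - dl by lra.
    have qa : a r - dl < a r by lra.
    have := le_trans (dev_lower P dm p0 (mud i _ q0) (mE (a r)) q0 qa) (NE i _ q0).
    rewrite -/(Er r) PE -/U Uu -EFinM lee_fin => h.
    have := pE1 r; have := pE0 r; nra.
  have := pE1 r; have := pE0 r; have := a_ge0 r; nra.
have Sb : al + \sum_(r < K) pA r <= 1.
  have H := @int_lin _ _ _ P C K Ar 1 (fun _ => 1) mC mAr ler01 (fun _ => ler01).
  have : (\int[P]_t (1 * \1_C t + \sum_(r < K) 1 * \1_(Ar r) t)%:E <= 1%:E)%E.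
    apply: (@le_trans _ _ (\int[P]_t (cst 1%:E) t)%E); last first.
      by rewrite integral_cst // mul1e; apply: probability_le1.
    apply: ge0_le_integral => //.
    - by move=> t _; rewrite lee_fin; apply: addr_ge0;
        [|apply: sumr_ge0 => r _]; rewrite mul1r indicE.
    - apply/measurable_realfun.measurable_EFinP.
      apply: measurable_realfun.measurable_funD.
        apply: measurable_realfun.measurable_funM; first exact: measurable_cst.
        exact: measurable_realfun.measurable_indic.
      apply: measurable_sum => r.
      apply: measurable_realfun.measurable_funM; first exact: measurable_cst.
      exact: measurable_realfun.measurable_indic.
    move=> t _; rewrite lee_fin mul1r.
    under eq_bigr do rewrite mul1r.
    case: (lerP (p i t) c) => pc.
      rewrite indicE (mem_set (pc : C t)) big1 ?addr0 // => r _.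
      rewrite indicE memNset // /Ar /= in_itv /= => /andP[h1 _].
      have := a_ge0 r; have : a r = c + r%:R * dl by [].
      have : 0 <= r%:R * dl by apply: mulr_ge0 => //; exact: ltW.
      lra.
    rewrite indicE memNset /C /=; last by apply/negP; rewrite -ltNge.
    rewrite add0r.
    case: (pselect (exists r : 'I_K, Ar r t)) => [[r Hr]|Hn].
      rewrite (bigD1 r) //= big1 ?addr0 ?indicE ?(mem_set Hr) //.
      move=> s sr; rewrite indicE memNset //.
      move: Hr; rewrite /Ar /= !in_itv /= => /andP[h1 h2] /andP[h3 h4].
      have: (r < s.+1)%N.
        rewrite -(ltr_nat R) -(ltr_pM2r dl0).
        have : a r = c + r%:R * dl by []. have : a s.+1 = c + s.+1%:R * dl by [].
        lra.
      have: (s < r.+1)%N.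
        rewrite -(ltr_nat R) -(ltr_pM2r dl0).
        have : a s = c + s%:R * dl by []. have : a r.+1 = c + r.+1%:R * dl by [].
        lra.
      move: sr; rewrite -val_eqE /= => /negP sr h5 h6; apply: sr.
      by rewrite eqn_leq; apply/andP; split; rewrite -ltnS.
    rewrite big1 // => r _; rewrite indicE memNset // => Hr; apply: Hn; by exists r.
  rewrite H PC mul1e.
  under eq_bigr do rewrite PA mul1e.
  by rewrite sumEFin => h; rewrite -lee_fin; exact: h.
have sumB : \sum_(r < K) a r.+1 * (pA r * pE r) <= (u + 2 * dl) * \sum_(r < K) pA r.
  rewrite mulr_sumr; apply: ler_sum => r _.
  rewrite mulrCA [(u + 2 * dl) * _]mulrC; apply: ler_wpM2l => //; exact: hE.
set S := \sum_(r < K) pA r in Ubr sumB Sb.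
have S0 : 0 <= S by apply: sumr_ge0.
have uq : (c + m) / 2 <= u by apply: lowU; lra.
have h1 : (u + 2 * dl) * S <= (u + 2 * dl) * (1 - al).
  by apply: ler_wpM2l; [have := dl0; lra | lra].
have h2 : al * ((c + m) / 2) <= al * u by apply: ler_wpM2l => //; exact: ltW.
have hd : 8 * dl = al * m - al * c by rewrite /dl; field.
nra.
Qed.

Theorem mainTheorem7 (R : realType) (n : nat) (v : valuation R n)
  (X : prices R n -> {set 'I_n})
  (d : measure_display) (T : measurableType d) (P : probability T R)
  (p : 'I_n -> T -> R) :
  nonneg_val v -> monotone_val v -> v finset.set0 = 0 -> submodular v ->
  decision_map v X ->
  mixed_NE P X p ->
  forall i : 'I_n,
    P [set t | p i t < marginal v [set i] (~: [set i])] = 0%E /\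
    ((\int[P]_t (util X i (fun j => p j t))%:E = 0)%E ->
       P.-negligible [set t | 0 < marginal v [set i] (X (fun j => p j t))]).
Proof.
move=> v0 mv _ sv dm NE i; split.
  exact: (part1 i v0 mv sv dm NE).
exact: (part2 dm NE).
Qed.
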